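(* Let $(f,X)$ be a marked branched covering, let $\alpha$ be an arc satisfying the Blowing Up Conditions, let $n\ge1$, and let $(g,X)$ be obtained by blowing up $(f,X)$ $n$ times along $\alpha$. Suppose $\Lambda$ is an arc system in $(S^2,X)$ which is forward invariant under $f$ up to isotopy relative to $X$. If there exists a lift $\widetilde\Lambda$ under $f$ (of a subset of $\Lambda$) with $\widetilde\Lambda\simeq_X\Lambda$ and $\widetilde\Lambda\cap\mathrm{Int}(\alpha)=\emptyset$, then $\Lambda$ is forward invariant under $g$ up to isotopy relative to $X$.
   Context: Branched coverings of $S^2$ are orientation-preserving continuous maps locally of the form $z\mapsto z^k$, assumed postcritically finite; $C(f)$ is the critical set and $P(f)$ the closure of the union of its forward images. A marked branched covering $(f,X)$ has $X$ finite, $P(f)\subset X$, $f(X)\subset X$. An arc in $(S^2,Y)$ ($Y$ finite) is the image of $j:[0,1]\to S^2$ with $j(\{0,1\})\subset Y$ (endpoints $e$), $j|_{(0,1)}$ an embedding and $j((0,1))\cap Y=\emptyset$; $\simeq_Y$ is isotopy through such arcs. An arc system is a set of pairwise non-isotopic arcs in $(S^2,X)$; $\Lambda\simeq_X\Lambda'$ means each element of either is isotopic to a unique element of the other. A lift of an arc $\lambda$ under $f$ is the closure of a component of $f^{-1}(\lambda\setminus e(\lambda))$; a lift of an arc system $\Lambda_0$ is an arc system in $(S^2,X)$ whose elements are lifts of elements of $\Lambda_0$. $\Lambda$ is forward invariant under $f$ up to isotopy relative to $X$ if some subset $\Lambda_0\subset\Lambda$ has a lift $\widetilde\Lambda_0\simeq_X\Lambda$.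 Blowing Up Conditions for a closed embedded arc $\alpha$ with distinct endpoints $e_{\pm1}$: (1) $f|_\alpha$ is a homeomorphism; (2) $\alpha$ is a union of arcs $\alpha_1,\dots,\alpha_L$ in $(S^2,f^{-1}(X))$; (3) $\mathrm{Int}(\alpha)\cap(X\cup C(f))=\emptyset$. Blowing up $n$ times along $\alpha$: choose an open Jordan disc $W\supset\mathrm{Int}(\alpha)$ with $e(\alpha)\subset\partial W$, $\overline W\cap f^{-1}(X)=\alpha\cap f^{-1}(X)$, $f|_{\overline W}$ injective; choose a closed disc $D\subset W\cup e(\alpha)$ with $e(\alpha)\subset\partial D$ and a continuous map $c:S^2\setminus\mathrm{Int}(D)\to S^2$, the identity outside $W$, which is the extension of $h_1^{-1}$ for an isotopy $h_t$ ($h_0=\mathrm{id}$, $h_t=\mathrm{id}$ off $W$) of embeddings of $S^2\setminus\mathrm{Int}(\alpha)$ with $h_1(S^2\setminus\mathrm{Int}(\alpha))=S^2\setminus(D\setminus e(\alpha))$; $c$ maps each of the two boundary arcs $\partial D_\pm$ of $D$ from $e_{-1}$ to $e_{+1}$ homeomorphically onto $\alpha$. With $\phi_n(z)=A_2((A_1(z))^{2n})$ on the closed unit disc $\overline\Delta$, $A_1(z)=-i\frac{z+1}{z-1}$, $A_2(z)=\frac{z-1}{z+1}$, $\partial\Delta_\pm=\partial\Delta\cap\{\pm\mathrm{Im}z\ge0\}$, choose a homeomorphism $h'$ of the sphere with $h'([-1,1])=f(\alpha)$, $h'(\pm1)=f(e_{\pm1})$, and a homeomorphism $h'':D\to\overline\Delta$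 equal on $\partial D_\pm$ to $(\phi_n|_{\partial\Delta_\pm})^{-1}\circ(h')^{-1}\circ f\circ c$. Set $g=f\circ c$ on $S^2\setminus\mathrm{Int}(D)$ and $g=h'\circ\phi_n\circ h''$ on $D$. *)

(* Defs.v *)
(* Model: S^2 is the unit sphere in R^3 = R*R*R,
   the complex plane C is R*R (with hand-written complex arithmetic),
   the Riemann sphere C u {oo} is option (R*R), identified with S^2 by
   inverse stereographic projection from the north pole. *)
From mathcomp Require Import all_boot all_order all_algebra.
From mathcomp Require Import all_classical all_reals all_analysis.
Import Order.TTheory GRing.Theory Num.Theory.
Import numFieldTopology.Exports numFieldNormedType.Exports.
Set Implicit Arguments.
Unset Strict Implicit.
Unset Printing Implicit Defensive.
Local Open Scope classical_set_scope.
Local Open Scope ring_scope.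

Notation T3 R := (R * R * R)%type.
Notation CC R := (R * R)%type.

Definition unitI {R : realType} : set R := [set t | 0 <= t <= 1].
Definition openI {R : realType} : set R := [set t | 0 < t < 1].
Definition unitSq {R : realType} : set (R * R) :=
  [set p | unitI p.1 /\ unitI p.2].

Definition S2 {R : realType} : set (T3 R) :=
  [set p | p.1.1 ^+ 2 + p.1.2 ^+ 2 + p.2 ^+ 2 = 1].

Definition inj_on {T U : Type} (A : set T) (F : T -> U) :=
  forall x y, A x -> A y -> F x = F y -> x = y.

Definition embedding_on {T U : topologicalType} (A : set T) (F : T -> U) :=
  inj_on A F /\ {within A, continuous F} /\
  exists G : U -> T, {within F @` A, continuous G} /\
                     (forall x, A x -> G (F x) = x).

Definition homeo_onto {T U : topologicalType} (A : set T) (B : set U)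
  (F : T -> U) := embedding_on A F /\ F @` A = B.

Definition sInt {R : realType} (A : set (T3 R)) : set (T3 R) :=
  [set x | A x /\ exists e : R, 0 < e /\
     forall y, S2 y -> ball x e y -> A y].

Definition ropen {R : realType} (A : set (T3 R)) :=
  exists O : set (T3 R), open O /\ A = O `&` S2.

Definition cadd {R : realType} (z w : CC R) : CC R := (z.1 + w.1, z.2 + w.2).
Definition csub {R : realType} (z w : CC R) : CC R := (z.1 - w.1, z.2 - w.2).
Definition cmul {R : realType} (z w : CC R) : CC R :=
  (z.1 * w.1 - z.2 * w.2, z.1 * w.2 + z.2 * w.1).
Definition cinv {R : realType} (z : CC R) : CC R :=
  (z.1 / (z.1 ^+ 2 + z.2 ^+ 2), - z.2 / (z.1 ^+ 2 + z.2 ^+ 2)).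
Definition cdiv {R : realType} (z w : CC R) : CC R := cmul z (cinv w).
Definition cpow {R : realType} (z : CC R) (k : nat) : CC R :=
  iter k (cmul z) (1, 0).
Definition cabs {R : realType} (z : CC R) : R := Num.sqrt (z.1 ^+ 2 + z.2 ^+ 2).

(* inverse stereographic projection C -> S^2 \ {N}, N = (0,0,1) *)
Definition stinv {R : realType} (w : CC R) : T3 R :=
  let d := w.1 ^+ 2 + w.2 ^+ 2 + 1 in
  (2 * w.1 / d, 2 * w.2 / d, (w.1 ^+ 2 + w.2 ^+ 2 - 1) / d).

(* the Riemann sphere C u {oo} = option C, identified with S^2 *)
Definition csph {R : realType} (w : option (CC R)) : T3 R :=
  match w with None => (0, 0, 1) | Some w => stinv w end.

Definition winds_once {R : realType} (gam : R -> CC R) :=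
  (forall t, unitI t -> gam t != (0, 0)) /\
  exists theta : R -> R, {within unitI, continuous theta} /\
    (forall t, unitI t ->
       gam t = (cabs (gam t) * cos (theta t), cabs (gam t) * sin (theta t))) /\
    theta 1 - theta 0 = 2 * pi.

(* a planar homeomorphism F on the open set U preserves orientation:
   small positively oriented circles go to loops of winding number +1 *)
Definition orient_pres_plane {R : realType} (U : set (CC R)) (F : CC R -> CC R) :=
  forall p, U p -> exists r0 : R, 0 < r0 /\ forall r, 0 < r < r0 ->
    winds_once (fun t => csub (F (cadd p (r * cos (2 * pi * t), r * sin (2 * pi * t))))
                              (F p)).

(* positively oriented chart of S^2 (orientation induced by stereographic
   projection from the north pole) *)
Definition pos_chart {R : realType} (U : set (T3 R)) (phi : T3 R -> CC R) :=
  ropen U /\ U `<=` S2 /\ open (phi @` U) /\ embedding_on U phi /\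
  orient_pres_plane (stinv @^-1` U) (phi \o stinv).

Definition local_form {R : realType} (f : T3 R -> T3 R) (p : T3 R) (k : nat) :=
  exists (U V : set (T3 R)) (phi psi : T3 R -> CC R),
    pos_chart U phi /\ pos_chart V psi /\ U p /\ phi p = (0, 0) /\
    psi (f p) = (0, 0) /\ f @` U `<=` V /\
    forall x, U x -> psi (f x) = cpow (phi x) k.

Definition branched_cov {R : realType} (f : T3 R -> T3 R) :=
  (forall x, S2 x -> S2 (f x)) /\ {within S2, continuous f} /\
  forall p, S2 p -> exists k, (0 < k)%N /\ local_form f p k.

Definition crit {R : realType} (f : T3 R -> T3 R) : set (T3 R) :=
  [set p | S2 p /\ exists k, (2 <= k)%N /\ local_form f p k].

Definition postcrit {R : realType} (f : T3 R -> T3 R) : set (T3 R) :=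
  closure (\bigcup_(m in [set m : nat | (1 <= m)%N]) (iter m f @` crit f)).

Definition marked {R : realType} (f : T3 R -> T3 R) (X : set (T3 R)) :=
  branched_cov f /\ finite_set (postcrit f) /\
  finite_set X /\ X `<=` S2 /\ postcrit f `<=` X /\ f @` X `<=` X.

Definition arc_param {R : realType} (Y : set (T3 R)) (j : R -> T3 R) :=
  {within unitI, continuous j} /\ (forall t, unitI t -> S2 (j t)) /\
  Y (j 0) /\ Y (j 1) /\ embedding_on openI j /\
  (forall t, openI t -> ~ Y (j t)).

Definition is_arc {R : realType} (Y : set (T3 R)) (l : set (T3 R)) :=
  exists j, arc_param Y j /\ l = j @` unitI.

Definition arc_iso {R : realType} (Y : set (T3 R)) (l l' : set (T3 R)) :=
  exists H : R -> R -> T3 R,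
    {within unitSq, continuous (fun p => H p.1 p.2)} /\
    (forall s, unitI s -> arc_param Y (H s)) /\
    l = H 0 @` unitI /\ l' = H 1 @` unitI.

Definition arc_system {R : realType} (X : set (T3 R)) (L : set (set (T3 R))) :=
  (forall l, L l -> is_arc X l) /\
  (forall l l', L l -> L l' -> arc_iso X l l' -> l = l').

Definition sys_iso {R : realType} (X : set (T3 R)) (L L' : set (set (T3 R))) :=
  (forall l, L l -> exists! l', L' l' /\ arc_iso X l l') /\
  (forall l', L' l' -> exists! l, L l /\ arc_iso X l' l).

(* lift of an arc l of (S^2,X): closure of a component of f^-1(l \ e(l)),
   where e(l) = l `&` X is the set of endpoints of l *)
Definition is_lift {R : realType} (f : T3 R -> T3 R) (X : set (T3 R))
    (l lt : set (T3 R)) :=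
  let A := S2 `&` f @^-1` (l `\` X) in
  exists x, A x /\ lt = closure (connected_component A x).

Definition lift_of_system {R : realType} (f : T3 R -> T3 R) (X : set (T3 R))
    (L0 Lt : set (set (T3 R))) :=
  arc_system X Lt /\ forall lt, Lt lt -> exists l, L0 l /\ is_lift f X l lt.

Definition fwd_invariant {R : realType} (f : T3 R -> T3 R) (X : set (T3 R))
    (L : set (set (T3 R))) :=
  exists L0 Lt, L0 `<=` L /\ lift_of_system f X L0 Lt /\ sys_iso X Lt L.

Definition jordan_curve {R : realType} (G : set (T3 R)) :=
  exists gam : R -> T3 R, {within unitI, continuous gam} /\
    (forall t, unitI t -> S2 (gam t)) /\ gam 0 = gam 1 /\
    inj_on [set t | 0 <= t < 1] gam /\ G = gam @` unitI.

Definition open_jdisc {R : realType} (W : set (T3 R)) :=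
  exists G x, jordan_curve G /\ S2 x /\ ~ G x /\
    W = connected_component (S2 `\` G) x.

Definition closed_disc {R : realType} (D : set (T3 R)) :=
  exists W, open_jdisc W /\ D = closure W.

Definition bdry_open {R : realType} (W : set (T3 R)) := closure W `\` W.
Definition bdry_closed {R : realType} (D : set (T3 R)) := D `\` sInt D.

Definition emb_arc {R : realType} (A : set (T3 R)) (a b : T3 R) :=
  a != b /\ exists j : R -> T3 R, {within unitI, continuous j} /\
    (forall t, unitI t -> S2 (j t)) /\ inj_on unitI j /\
    j 0 = a /\ j 1 = b /\ A = j @` unitI.

Definition arcInt {R : realType} (A : set (T3 R)) (a b : T3 R) :=
  A `\` [set a; b].

Definition blowing_up_conditions {R : realType} (f : T3 R -> T3 R)
    (X alpha : set (T3 R)) (a b : T3 R) :=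
  emb_arc alpha a b /\
  homeo_onto alpha (f @` alpha) f /\
  (exists (L : nat) (al : nat -> set (T3 R)), (0 < L)%N /\
     alpha = \bigcup_(i in [set i : nat | (i < L)%N]) al i /\
     forall i, (i < L)%N -> is_arc (S2 `&` f @^-1` X) (al i)) /\
  arcInt alpha a b `&` (X `|` crit f) = set0.

Definition A1 {R : realType} (z : CC R) : option (CC R) :=
  if z == (1, 0) then None
  else Some (cmul (0, -1) (cdiv (cadd z (1, 0)) (csub z (1, 0)))).
Definition A2 {R : realType} (w : option (CC R)) : option (CC R) :=
  match w with
  | None => Some (1, 0)
  | Some w => if w == (-1, 0) then None
              else Some (cdiv (csub w (1, 0)) (cadd w (1, 0)))
  end.
Definition powo {R : realType} (w : option (CC R)) (m : nat) : option (CC R) :=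
  match w with None => None | Some w => Some (cpow w m) end.
Definition phin {R : realType} (n : nat) (z : CC R) : option (CC R) :=
  A2 (powo (A1 z) (2 * n)).

Definition cdisc {R : realType} : set (CC R) := [set z | z.1 ^+ 2 + z.2 ^+ 2 <= 1].
Definition cdisc_up {R : realType} : set (CC R) :=
  [set z | z.1 ^+ 2 + z.2 ^+ 2 = 1 /\ 0 <= z.2].
Definition cdisc_down {R : realType} : set (CC R) :=
  [set z | z.1 ^+ 2 + z.2 ^+ 2 = 1 /\ z.2 <= 0].
Definition seg {R : realType} : set (T3 R) :=
  [set csph (Some (t, 0)) | t in [set t : R | -1 <= t <= 1]].

Definition blown_up {R : realType} (f : T3 R -> T3 R) (X alpha : set (T3 R))
    (a b : T3 R) (n : nat) (g : T3 R -> T3 R) :=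
  let Ia := arcInt alpha a b in
  exists (W D Dp Dm : set (T3 R)) (c : T3 R -> T3 R) (h : R -> T3 R -> T3 R)
         (h' : T3 R -> T3 R) (h'' : T3 R -> CC R),
  (open_jdisc W /\ Ia `<=` W /\ bdry_open W a /\ bdry_open W b /\
   closure W `&` (S2 `&` f @^-1` X) = alpha `&` (S2 `&` f @^-1` X) /\
   inj_on (closure W) f) /\
  (closed_disc D /\ D `<=` W `|` [set a; b] /\ bdry_closed D a /\
   bdry_closed D b) /\
  ({within [set p | unitI p.1 /\ (S2 `\` Ia) p.2],
       continuous (fun p => h p.1 p.2)} /\
   (forall t, unitI t -> embedding_on (S2 `\` Ia) (h t) /\
                         (h t) @` (S2 `\` Ia) `<=` S2) /\
   (forall x, (S2 `\` Ia) x -> h 0 x = x) /\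
   (forall t x, unitI t -> (S2 `\` Ia) x -> ~ W x -> h t x = x) /\
   (h 1) @` (S2 `\` Ia) = S2 `\` (D `\` [set a; b])) /\
  ({within S2 `\` sInt D, continuous c} /\
   (forall x, (S2 `\` sInt D) x -> S2 (c x)) /\
   (forall x, (S2 `\` sInt D) x -> ~ W x -> c x = x) /\
   (forall x, (S2 `\` Ia) x -> c (h 1 x) = x)) /\
  (* the two boundary arcs of D from a = e_{-1} to b = e_{+1},
     each mapped homeomorphically onto alpha by c *)
  (emb_arc Dp a b /\ emb_arc Dm a b /\ Dp `|` Dm = bdry_closed D /\
   Dp `&` Dm = [set a; b] /\ homeo_onto Dp alpha c /\
   homeo_onto Dm alpha c) /\
  (homeo_onto S2 S2 h' /\ h' @` seg = f @` alpha /\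
   h' (csph (Some (-1, 0))) = f a /\ h' (csph (Some (1, 0))) = f b) /\
  (homeo_onto D cdisc h'' /\
   (forall x, Dp x -> cdisc_up (h'' x) /\
                      h' (csph (phin n (h'' x))) = f (c x)) /\
   (forall x, Dm x -> cdisc_down (h'' x) /\
                      h' (csph (phin n (h'' x))) = f (c x))) /\
  (forall x, (S2 `\` sInt D) x -> g x = f (c x)) /\
  (forall x, D x -> g x = h' (csph (phin n (h'' x)))).

(* Main.v *)
Require Import Defs.
From mathcomp Require Import all_boot all_order all_algebra.
From mathcomp Require Import all_classical all_reals all_analysis.
From mathcomp Require Import ring lra.
Import Order.TTheory GRing.Theory Num.Theory.
Import numFieldTopology.Exports numFieldNormedType.Exports.
Local Open Scope classical_set_scope.
Local Open Scope ring_scope.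

Lemma wcontE {T U : topologicalType} (A : set T) (f : T -> U) :
  {within A, continuous f} <->
  (forall x, A x -> forall B, nbhs (f x) B -> nbhs x (fun y => A y -> B (f y))).
Proof.
rewrite subspace_continuousP; split => H x Ax.
- move=> B HB; exact: (H x Ax _ HB).
- move=> B HB; exact: (H x Ax _ HB).
Qed.

Lemma nbhs_open {T : topologicalType} {x : T} {P : set T} :
  nbhs x P -> exists O, [/\ open O, O x & O `<=` P].
Proof. by rewrite nbhsE => -[B [oB Bx] BP]; exists B. Qed.

Lemma wcont_at {T U : topologicalType} {A : set T} {f : T -> U} {x : T} {B : set U} :
  {within A, continuous f} -> A x -> nbhs (f x) B ->
  exists O, [/\ open O, O x & forall y, A y -> O y -> B (f y)].
Proof.
move=> /wcontE cf Ax nB; have [Ob [oO Ox OP]] := nbhs_open (cf x Ax B nB).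
by exists Ob; split => // y Ay Oy; exact: OP.
Qed.

Lemma wcomp {T U V : topologicalType} {A : set T} {B : set U} {f : T -> U} {g : U -> V} :
  {within A, continuous f} -> {within B, continuous g} ->
  (forall x, A x -> B (f x)) -> {within A, continuous (g \o f)}.
Proof.
move=> /wcontE cf /wcontE cg AB; apply/wcontE => x Ax C hC.
have := cf _ Ax _ (cg _ (AB _ Ax) _ hC).
by apply: filterS => y H Ay; exact: H Ay (AB _ Ay).
Qed.

Lemma wpair {T U V : topologicalType} {A : set T} {f : T -> U} {g : T -> V} :
  {within A, continuous f} -> {within A, continuous g} ->
  {within A, continuous (fun x => (f x, g x))}.
Proof.
rewrite !subspace_continuousP => cf cg x Ax.
exact: (cvg_pair (cf x Ax) (cg x Ax)).
Qed.

Lemma wext {T U : topologicalType} {A : set T} {f : T -> U} (g : T -> U) :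
  {within A, continuous f} -> (forall x, A x -> f x = g x) ->
  {within A, continuous g}.
Proof.
move=> cf e; apply: (subspace_eq_continuous _ cf) => x /set_mem Ax; exact: e.
Qed.

Lemma wsub {T U : topologicalType} {A B : set T} {f : T -> U} :
  A `<=` B -> {within B, continuous f} -> {within A, continuous f}.
Proof. exact: continuous_subspaceW. Qed.

Lemma wglob {T U : topologicalType} {A : set T} {f : T -> U} :
  continuous f -> {within A, continuous f}.
Proof. exact: continuous_subspaceT. Qed.

Lemma connected_between {T : topologicalType} {K M : set T} :
  connected K -> K `<=` M -> M `<=` closure K -> connected M.
Proof.
move=> cK KM Mcl B [m Bm] [C1 oC1 B1] [C2 cC2 B2].
have BM : B `<=` M by rewrite B1 => y [].
have KB : K `<=` B.
  have KBK : K `&` B = K.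
    apply: cK.
    - have : C1 m by move: Bm; rewrite B1 => -[].
      have := Mcl m (BM m Bm) C1 (open_nbhs_nbhs (conj oC1 _)).
      move=> H C1m; have [y [Ky C1y]] := H C1m; exists y; split => //.
      by rewrite B1; split => //; exact: KM.
    - exists C1 => //; rewrite B1 setIA; congr (_ `&` _).
      by apply/seteqP; split => y; [case|move=> Ky; split => //; exact: KM].
    - exists C2 => //; rewrite B2 setIA; congr (_ `&` _).
      by apply/seteqP; split => y; [case|move=> Ky; split => //; exact: KM].
  by move=> y Ky; rewrite -KBK in Ky; case: Ky.
apply/seteqP; split => // y My; rewrite B2; split => //.
have : closure K `<=` C2.
  by move=> z Kz; apply: cC2; apply: (closureS _ Kz) => w Kw; rewrite B2 in KB; case: (KB w Kw).
by apply; exact: Mcl.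
Qed.

Lemma component_closure {T : topologicalType} (A : set T) x p :
  closure (connected_component A x) p -> A p -> connected_component A x p.
Proof.
move=> clp Ap.
have Ax : A x.
  have [y [Ky _]] := clp setT filterT.
  by case: Ky => C [Cx CA _] _; exact: CA.
apply: (connected_component_max (B := connected_component A x `|` [set p])).
- by left; exact: connected_component_refl.
- by move=> y [/connected_component_sub|->].
- apply: (connected_between (K := connected_component A x)).
  + exact: component_connected.
  + by move=> y Ky; left.
  + by move=> y [/subset_closure|->].
- by right.
Qed.

Lemma unitI_itv {R : realType} : (@unitI R) = `[0, 1]%classic.
Proof. by rewrite set_itvcc. Qed.

Lemma unitI_compact {R : realType} : compact (@unitI R).
Proof. rewrite unitI_itv; exact: segment_compact. Qed.

Lemma loc_param {R : realType} (j : R -> T3 R) t0 e :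
  {within unitI, continuous j} -> 0 < e ->
  (forall s, unitI s -> j s = j t0 -> ball t0 e s) ->
  exists Ob, [/\ open Ob, Ob (j t0) & forall s, unitI s -> Ob (j s) -> ball t0 e s].
Proof.
move=> cj e0 H.
set B := unitI `&` ~` ball t0 e.
have cB : compact B.
  apply: compact_closedI; first exact: unitI_compact.
  exact: open_closedC (ball_open _ _).
have cjB : compact (j @` B) := continuous_compact (wsub (@subIsetl _ unitI _) cj) cB.
have clB : closed (j @` B) := compact_closed (@norm_hausdorff _ _) cjB.
exists (~` (j @` B)); split.
- exact: closed_openC.
- by move=> [s [Is nb] eq]; apply: nb; exact: H.
- move=> s Is Os; apply: contrapT => nb; apply: Os; exists s => //.
Qed.

Lemma no_int_min {R : realType} (u : R -> R) t0 :
  {within unitI, continuous u} ->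
  (forall s1 s2, Defs.openI s1 -> Defs.openI s2 -> u s1 = u s2 -> s1 = s2) ->
  Defs.openI t0 -> (forall s, unitI s -> u t0 <= u s) -> False.
Proof.
move=> cu inj /andP[t00 t01] umin.
pose s1 := t0 / 2; pose s2 := (t0 + 1) / 2.
have s1I : Defs.openI s1 by rewrite /Defs.openI /s1 /=; apply/andP; split; lra.
have s2I : Defs.openI s2 by rewrite /Defs.openI /s2 /=; apply/andP; split; lra.
have t0I : Defs.openI t0 by rewrite /Defs.openI /=; apply/andP; split.
have oI (x : R) : Defs.openI x -> unitI x by rewrite /Defs.openI /unitI /= => /andP[h1 h2]; apply/andP; split; lra.
have lt1 : u t0 < u s1.
  rewrite lt_neqAle umin ?andbT; last exact: oI.
  apply/eqP => e; have := inj _ _ t0I s1I e; rewrite /s1; lra.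
have lt2 : u t0 < u s2.
  rewrite lt_neqAle umin ?andbT; last exact: oI.
  apply/eqP => e; have := inj _ _ t0I s2I e; rewrite /s2; lra.
have sub (a b : R) : 0 <= a -> b <= 1 -> `[a, b]%classic `<=` unitI.
  move=> a0 b1 x /=; rewrite in_itv /= => /andP[h1 h2]; apply/andP; split; lra.
case: (leP (u s1) (u s2)) => h.
- have a1 : t0 <= s2 by rewrite /s2; lra.
  have a2 : s2 <= 1 by rewrite /s2; lra.
  have a3 : Num.min (u t0) (u s2) <= u s1 <= Num.max (u t0) (u s2).
    by apply/andP; split; [rewrite ge_min (ltW lt1)|rewrite le_max h orbT].
  have [c cI uc] := @IVT R u t0 s2 (u s1) a1 (wsub (sub _ _ (ltW t00) a2) cu) a3.
  move: cI; rewrite in_itv /= => /andP[c1 c2].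
  have cO : Defs.openI c by rewrite /Defs.openI /=; apply/andP; split; rewrite /s2 in c2; lra.
  have := inj _ _ cO s1I uc; rewrite /s1; lra.
- have a1 : s1 <= t0 by rewrite /s1; lra.
  have a2 : 0 <= s1 by rewrite /s1; lra.
  have a3 : Num.min (u s1) (u t0) <= u s2 <= Num.max (u s1) (u t0).
    by apply/andP; split; [rewrite ge_min (ltW lt2) orbT|rewrite le_max (ltW h)].
  have [c cI uc] := @IVT R u s1 t0 (u s2) a1 (wsub (sub _ _ a2 (ltW t01)) cu) a3.
  move: cI; rewrite in_itv /= => /andP[c1 c2].
  have cO : Defs.openI c by rewrite /Defs.openI /=; apply/andP; split; rewrite /s1 in c1; lra.
  have := inj _ _ cO s2I uc; rewrite /s2; lra.
Qed.

Lemma endpoint_in {R : realType} (j : R -> T3 R) (Y : set (T3 R)) (L : nat)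
    (al : nat -> set (T3 R)) (r : R) :
  {within unitI, continuous j} -> inj_on unitI j ->
  j @` unitI = \bigcup_(i in [set i : nat | (i < L)%N]) al i ->
  (forall i, (i < L)%N -> is_arc Y (al i)) -> (r = 0 \/ r = 1) -> Y (j r).
Proof.
move=> cj injj jA arcs hr.
have rI : unitI r by case: hr => ->; rewrite /unitI /=; apply/andP; split; lra.
have oI (x : R) : Defs.openI x -> unitI x.
  by rewrite /Defs.openI /unitI /= => /andP[h1 h2]; apply/andP; split; lra.
have : (j @` unitI) (j r) by exists r.
rewrite jA => -[i iL ai].
have [ji [[cji [Sji [Y0 [Y1 [[injji [cjio [G [cG GK]]]] nY]]]]] alE]] := arcs i iL.
rewrite alE in ai; case: ai => t0 t0I jit0.
case: (pselect (t0 = 0)) => [e0|n0]; first by rewrite -jit0 e0.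
case: (pselect (t0 = 1)) => [e1|n1]; first by rewrite -jit0 e1.
have t0O : Defs.openI t0.
  move: t0I; rewrite /unitI /Defs.openI /= => /andP[h1 h2].
  apply/andP; split; rewrite lt_neqAle ?h1 ?h2 andbT.
    by apply/eqP => e; apply: n0.
  by apply/eqP => e; apply: n1.
exfalso.
have ex : forall s, exists r', unitI s -> unitI r' /\ j r' = ji s.
  move=> s; case: (pselect (unitI s)) => sI; last by exists 0.
  have : (j @` unitI) (ji s) by rewrite jA; exists i => //; rewrite alE; exists s.
  by case=> r' r'I e; exists r'.
have [u uP] := choice ex.
have uI s : unitI s -> unitI (u s) by move=> /uP [].
have uE s : unitI s -> j (u s) = ji s by move=> /uP [].
have ucont : {within unitI, continuous u}.
  apply/wcontE => s sI B /nbhs_ballP [e e0 eB].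
  have [Ob [oOb Obu Obp]] := @loc_param R j (u s) e cj e0 (fun r' r'I e' =>
     eq_ind_r (fun z => ball (u s) e z) (ballxx (u s) e0) (injj _ _ r'I (uI s sI) e')).
  rewrite (uE s sI) in Obu.
  have [Ob2 [oOb2 Ob2s Ob2P]] := wcont_at cji sI (open_nbhs_nbhs (conj oOb Obu)).
  apply: (filterS _ (open_nbhs_nbhs (conj oOb2 Ob2s))) => s' Ob2s' s'I.
  apply: eB; apply: Obp; first exact: uI.
  by rewrite uE //; exact: Ob2P.
have uinj : forall s1 s2, Defs.openI s1 -> Defs.openI s2 -> u s1 = u s2 -> s1 = s2.
  move=> s1 s2 h1 h2 e; apply: injji => //.
  by rewrite -(uE s1 (oI _ h1)) -(uE s2 (oI _ h2)) e.
have ut0 : u t0 = r by apply: injj; [exact: uI|exact: rI|rewrite uE // jit0].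
case: hr => hr.
- apply: (@no_int_min R u t0 ucont uinj t0O) => s sI.
  by rewrite ut0 hr; have /andP[] := uI s sI.
- apply: (@no_int_min R (fun s => - u s) t0 _ _ t0O).
  + have := wcomp (B := setT) ucont (wglob (@opp_continuous R)) (fun _ _ => I); exact.
  + by move=> s1 s2 h1 h2 /eqP; rewrite eqr_opp => /eqP; exact: uinj.
  + move=> s sI; rewrite lerN2 ut0 hr; by have /andP[] := uI s sI.
Qed.

Lemma openI_itv {R : realType} : (@Defs.openI R) = `]0, 1[%classic.
Proof. by rewrite set_itvoo. Qed.

Lemma openI_open {R : realType} : open (@Defs.openI R).
Proof. rewrite openI_itv; exact: itv_open. Qed.

Lemma openI_unitI {R : realType} {x : R} : Defs.openI x -> unitI x.
Proof. by rewrite /Defs.openI /unitI /= => /andP[h1 h2]; apply/andP; split; lra. Qed.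

Lemma unit_open_cases {R : realType} (t : R) : unitI t -> t <> 0 -> t <> 1 -> Defs.openI t.
Proof.
rewrite /unitI /Defs.openI /= => /andP[h1 h2] n0 n1.
apply/andP; split; rewrite lt_neqAle ?h1 ?h2 andbT.
  by apply/eqP => e; apply: n0.
by apply/eqP => e; apply: n1.
Qed.

Lemma cpow1 {R : realType} (z : CC R) : cpow z 1 = z.
Proof.
case: z => p1 p2; rewrite /cpow /= /cmul /=.
by rewrite !mulr1 !mulr0 subr0 add0r.
Qed.

Lemma LOC {R : realType} (f : T3 R -> T3 R) (X l : set (T3 R)) x k :
  marked f X -> is_arc X l ->
  connected_component (S2 `&` f @^-1` (l `\` X)) x k ->
  exists Ob, [/\ open Ob, Ob k & forall w, S2 w -> Ob w ->
     (S2 `&` f @^-1` (l `\` X)) w ->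
     connected_component (S2 `&` f @^-1` (l `\` X)) x w].
Proof.
move=> [[fS [fc fl]] [_ [_ [XS [PX fX]]]]].
move=> [j [[cj [Sj [Xj0 [Xj1 [[injj [cjo [Gj [cGj GjK]]]] jnX]]]]] lE]] Kk.
set A := S2 `&` f @^-1` (l `\` X).
have Ak : A k := connected_component_sub Kk.
case: (Ak) => Sk [lfk nXfk].
have ncrit : ~ crit f k.
  move=> ck; apply: nXfk; apply: PX; apply: subset_closure.
  by exists 1%N => //=; exists k.
have [kk [kk0 lf]] := fl k Sk.
have kk1 : kk = 1%N.
  case: kk kk0 lf => [|[|kk]] //= _ lf; exfalso; apply: ncrit; split => //.
  by exists kk.+2.
subst kk.
case: lf => U [V [phi [psi [pcU [pcV [Uk [phik [psifk [fUV eqU]]]]]]]]].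
case: pcU => [[OU [oOU UE]] [US [ophiU [[injphi [cphi [Gphi [cGphi GphiK]]]] _]]]].
case: pcV => [[OV [oOV VE]] [VS [_ [[injpsi [cpsi _]] _]]]].
have eqU' : forall y, U y -> psi (f y) = phi y.
  by move=> y Uy; rewrite eqU // cpow1.
have Vfk : V (f k) by apply: fUV; exists k.
rewrite lE in lfk; case: lfk => t0 t0I jt0.
have t0O : Defs.openI t0.
  apply: unit_open_cases => // e; apply: nXfk; rewrite -jt0 e //.
have OVfk : OV (f k) by move: Vfk; rewrite VE => -[].
have [Q3 [oQ3 Q3fk Q3P]] := wcont_at cpsi Vfk
   (open_nbhs_nbhs (conj ophiU (ex_intro2 _ _ k Uk (esym (eqU' k Uk))))).
have nP : nbhs t0 (fun s => Defs.openI s /\ V (j s) /\ (phi @` U) (psi (j s))).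
  have n1 : nbhs t0 Defs.openI := open_nbhs_nbhs (conj openI_open t0O).
  have n2 := (wcontE _ _).1 cj t0 (openI_unitI t0O) _ (open_nbhs_nbhs (conj oOV (eq_ind_r OV OVfk jt0))).
  have n3 := (wcontE _ _).1 cj t0 (openI_unitI t0O) _ (open_nbhs_nbhs (conj oQ3 (eq_ind_r Q3 Q3fk jt0))).
  apply: filterS (filterI n1 (filterI n2 n3)) => s [sO [h2 h3]].
  have sI := openI_unitI sO.
  have Vjs : V (j s) by rewrite VE; split; [exact: h2|exact: Sj].
  by split => //; split => //; apply: Q3P => //; exact: h3.
have [d /= d0 dP] := (nbhs_ballP _ _).1 nP.
pose sig := Gphi \o psi \o j.
have sigP s : ball t0 d s -> U (sig s) /\ f (sig s) = j s.
  move=> /dP [_ [Vjs [u Uu phiu]]].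
  have fuV : V (f u) by apply: fUV; exists u.
  have e1 : f u = j s by apply: injpsi => //; rewrite eqU' // phiu.
  by rewrite /sig /= -phiu GphiK // -e1.
have bI : ball t0 d `<=` unitI by move=> s /dP [/openI_unitI].
have csig : {within ball t0 d, continuous sig}.
  apply: (wcomp (B := phi @` U)); last by move=> s /dP [_ [_]].
    apply: (wcomp (B := V)); last by move=> s /dP [_ []].
      exact: wsub bI cj.
    exact: cpsi.
  exact: cGphi.
have connB : connected (ball t0 d).
  by apply/connected_intervalP; rewrite ball_itv; exact: interval_is_interval.
have connS := connected_continuous_connected connB csig.
have sigt0 : sig t0 = k by rewrite /sig /= jt0 eqU' // GphiK.
have sigA : sig @` ball t0 d `<=` A.
  move=> y [s bs <-]; have [Us fs] := sigP s bs; split; first exact: US.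
  have sO : Defs.openI s by have [] := dP s bs.
  rewrite /preimage /= fs; split; first by rewrite lE; exists s => //; exact: openI_unitI.
  exact: jnX.
have sigK : sig @` ball t0 d `<=` connected_component A x.
  move=> y ys; apply: (connected_component_trans Kk).
  rewrite -sigt0; apply: (connected_component_max _ sigA connS ys).
  by exists t0 => //; exact: ballxx.
have H s : unitI s -> j s = j t0 -> ball t0 d s.
  move=> sI e; case: (pselect (s = 0)) => [s0|n0].
    by exfalso; apply: nXfk; rewrite -jt0 -e s0.
  case: (pselect (s = 1)) => [s1|n1].
    by exfalso; apply: nXfk; rewrite -jt0 -e s1.
  have -> : s = t0 by apply: injj => //; exact: unit_open_cases.
  exact: ballxx.
have [Ol [oOl Olk OlP]] := @loc_param R j t0 d cj d0 H.
rewrite jt0 in Olk.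
have [P [oP Pk PP]] := wcont_at fc Sk (open_nbhs_nbhs (conj oOl Olk)).
exists (OU `&` P); split.
- exact: openI.
- by split => //; move: Uk; rewrite UE => -[].
- move=> w Sw [OUw Pw] [_ [lfw nXfw]].
  have Uw : U w by rewrite UE.
  rewrite lE in lfw; case: lfw => s sI jsfw.
  have bs : ball t0 d s by apply: OlP => //; rewrite jsfw; exact: PP.
  have <- : sig s = w by rewrite /sig /= jsfw eqU' // GphiK.
  by apply: sigK; exists s.
Qed.

Lemma cont_fst {T U : topologicalType} : continuous (@fst T U).
Proof. by move=> [a b]; exact: cvg_fst. Qed.

Lemma cont_snd {T U : topologicalType} : continuous (@snd T U).
Proof. by move=> [a b]; exact: cvg_snd. Qed.

Lemma cont_aff {R : realType} (a b : R) : continuous (fun t : R => a * t + b).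
Proof.
move=> t.
have h1 : (fun s : R => a) x @[x --> t] --> a by exact: cvg_cst.
have h2 : (fun s : R => s) x @[x --> t] --> t by exact: cvg_id.
have h3 := @cvgM R R (nbhs t) (nbhs_filter t) _ _ _ _ h1 h2.
have h4 : (fun s : R => b) x @[x --> t] --> b by exact: cvg_cst.
exact: (cvgD h3 h4).
Qed.

Lemma cont_aff1 {R : realType} (a b : R) :
  continuous (fun p : R * R => (a * p.1 + b, p.2)).
Proof.
move=> p.
have c1 : (fun q : R * R => a * q.1 + b) x @[x --> p] --> (a * p.1 + b).
  exact: (continuous_comp (@cont_fst R R p) (cont_aff a b p.1)).
have c2 : (fun q : R * R => q.2) x @[x --> p] --> p.2 by exact: cont_snd.
exact: (cvg_pair c1 c2).
Qed.

Lemma closed_fst_snd {R : realType} (A B : set R) :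
  closed A -> closed B -> closed [set p : R * R | A p.1 /\ B p.2].
Proof.
move=> cA cB.
have -> : [set p : R * R | A p.1 /\ B p.2] = (fst @^-1` A) `&` (snd @^-1` B) by [].
apply: closedI.
- by move: (@cont_fst R R) => /continuous_closedP; apply.
- by move: (@cont_snd R R) => /continuous_closedP; apply.
Qed.

Lemma unitIP {R : realType} (s : R) : unitI s <-> 0 <= s /\ s <= 1.
Proof. by rewrite /unitI /=; split => [/andP[]|[-> ->]]. Qed.

Definition isoP {R : realType} (X : set (T3 R)) (H : R -> R -> T3 R) :=
  {within unitSq, continuous (fun p : R * R => H p.1 p.2)} /\
  (forall s, unitI s -> arc_param X (H s)).

Lemma iso_rev {R : realType} {X : set (T3 R)} {H} :
  isoP X H -> isoP X (fun s => H (1 - s)).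
Proof.
move=> [cH aH]; split.
- have SS : forall p : R * R, unitSq p -> unitSq (-1 * p.1 + 1, p.2).
    by move=> p; rewrite /unitSq /= !unitIP => -[h1 h2]; split => //; lra.
  have h := wcomp (A := unitSq) (B := unitSq) (wglob (cont_aff1 (-1) 1)) cH SS.
  apply: (wext _ h) => p _ /=.
  by rewrite mulN1r addrC.
- move=> s sI; have [s0 s1] := (unitIP s).1 sI; apply: aH; apply/unitIP; lra.
Qed.

Definition icat {R : realType} (H1 H2 : R -> R -> T3 R) : R -> R -> T3 R :=
  fun s t => if s <= 1/2 then H1 (2 * s) t else H2 (2 * s - 1) t.

Lemma icat0 {R : realType} (H1 H2 : R -> R -> T3 R) : icat H1 H2 0 = H1 0.
Proof.
apply: funext => t; rewrite /icat.
have -> : ((0 : R) <= 1/2) = true by apply/idP; lra.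
by rewrite mulr0.
Qed.

Lemma icat1 {R : realType} (H1 H2 : R -> R -> T3 R) : icat H1 H2 1 = H2 1.
Proof.
apply: funext => t; rewrite /icat.
have -> : ((1 : R) <= 1/2) = false by apply/negP => h; lra.
by congr H2; lra.
Qed.

Lemma iso_cat {R : realType} {X : set (T3 R)} {H1 H2} :
  isoP X H1 -> isoP X H2 -> (forall t, unitI t -> H1 1 t = H2 0 t) ->
  isoP X (icat H1 H2).
Proof.
move=> [c1 a1] [c2 a2] e; split.
- pose SA := [set p : R * R | `[0, 1/2]%classic p.1 /\ `[0, 1]%classic p.2].
  pose SB := [set p : R * R | `[1/2, 1]%classic p.1 /\ `[0, 1]%classic p.2].
  have -> : unitSq = SA `|` SB.
    apply/seteqP; split => p; rewrite /SA /SB /unitSq /= !in_itv /= !unitIP.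
      move=> [[h1 h2] [h3 h4]]; case: (lerP p.1 (1/2)) => h.
        by left; split; apply/andP; split.
      by right; split; apply/andP; split => //; lra.
    by case=> -[/andP[h1 h2] /andP[h3 h4]]; split; split => //; lra.
  apply: withinU_continuous.
  + by apply: closed_fst_snd; exact: itv_closed.
  + by apply: closed_fst_snd; exact: itv_closed.
  + have SAS : forall p, SA p -> unitSq (2 * p.1 + 0, p.2).
      move=> p; rewrite /SA /unitSq /= !in_itv /= !unitIP => -[/andP[h1 h2] /andP[h3 h4]].
      by split; split => //; lra.
    have := wcomp (A := SA) (B := unitSq) (wglob (cont_aff1 2 0)) c1 SAS.
    move=> h; apply: (wext _ h) => p; rewrite /SA /= in_itv /= => -[/andP[h1 h2] _].
    by rewrite /icat h2 addr0.
  + have SBS : forall p, SB p -> unitSq (2 * p.1 + -1, p.2).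
      move=> p; rewrite /SB /unitSq /= !in_itv /= !unitIP => -[/andP[h1 h2] /andP[h3 h4]].
      by split; split => //; lra.
    have := wcomp (A := SB) (B := unitSq) (wglob (cont_aff1 2 (-1))) c2 SBS.
    move=> h; apply: (wext _ h) => p; rewrite /SB /= !in_itv /= => -[/andP[h1 h2] /andP[h3 h4]].
    rewrite /icat /=; case: ifP => h5.
      have -> : 2 * p.1 + -1 = 0 by lra.
      rewrite -e ?unitIP //; congr H1; lra.
    by [].
- move=> s sI; have [s0 s1] := (unitIP s).1 sI; case: (boolP (s <= 1/2)) => h.
    have -> : icat H1 H2 s = H1 (2 * s) by apply: funext => t; rewrite /icat h.
    by apply: a1; apply/unitIP; lra.
  have -> : icat H1 H2 s = H2 (2 * s - 1) by apply: funext => t; rewrite /icat (negbTE h).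
  by apply: a2; apply/unitIP; move: h; rewrite -ltNge => h; lra.
Qed.

Lemma iso_h {R : realType} {X E : set (T3 R)} {h : R -> T3 R -> T3 R} {j} :
  {within [set p | unitI p.1 /\ E p.2], continuous (fun p => h p.1 p.2)} ->
  (forall t, unitI t -> embedding_on E (h t) /\ (h t) @` E `<=` S2) ->
  (forall t x, unitI t -> X x -> h t x = x) -> X `<=` E ->
  arc_param X j -> (forall t, unitI t -> E (j t)) ->
  isoP X (fun s t => h s (j t)).
Proof.
move=> hc hemb hX XE [cj [Sj [Xj0 [Xj1 [[injj [cjo [Gj [cGj GjK]]]] jnX]]]]] jE.
split.
- have inner : {within unitSq, continuous (fun p : R * R => (p.1, j p.2))}.
    apply: wpair; first exact: wglob cont_fst.
    apply: (wcomp (B := unitI)) => //; first exact: wglob cont_snd.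
    by move=> p [].
  apply: (wcomp inner hc) => p [p1 p2]; split => //; exact: jE.
- move=> s sI; have [[injh [ch [Gh [cGh GhK]]]] hS] := hemb s sI.
  have c1 : {within unitI, continuous (fun t => h s (j t))}.
    exact: (wcomp cj ch jE).
  split => //; split; [|split; [|split; [|split]]].
  + by move=> t tI; apply: hS; exists (j t) => //; exact: jE.
  + by rewrite hX.
  + by rewrite hX.
  + split.
      move=> t1 t2 h1 h2 eq; apply: injj => //; apply: injh => //;
        exact: jE (openI_unitI _).
    split; first exact: wsub (@openI_unitI R) c1.
    exists (Gj \o Gh); split.
      apply: (wcomp (B := j @` Defs.openI)) => //.
        apply: wsub cGh; move=> y [t tO <-]; exists (j t) => //; exact: jE (openI_unitI _).
      move=> y [t tO <-]; exists t => //; rewrite GhK //; exact: jE (openI_unitI _).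
    by move=> t tO /=; rewrite GhK ?GjK //; exact: jE (openI_unitI _).
  + move=> t tO Xh; apply: (jnX t tO).
    have e : h s (j t) = h s (h s (j t)) by rewrite (hX s (h s (j t)) sI Xh).
    have := injh _ _ (jE _ (openI_unitI tO)) (XE _ Xh) e.
    by move=> ->.
Qed.

Lemma param_c {R : realType} {X E : set (T3 R)} {h1 c : T3 R -> T3 R} {j} :
  {within E, continuous h1} -> {within h1 @` E, continuous c} ->
  (forall y, E y -> c (h1 y) = y) -> (forall x, X x -> c x = x) ->
  (forall x, X x -> h1 x = x) -> E `<=` S2 ->
  arc_param X j -> (forall t, unitI t -> (h1 @` E) (j t)) ->
  arc_param X (c \o j) /\ (forall t, unitI t -> E (c (j t)) /\ h1 (c (j t)) = j t).
Proof.
move=> ch1 cc cK cX h1X ES [cj [Sj [Xj0 [Xj1 [[injj [cjo [Gj [cGj GjK]]]] jnX]]]]] jE.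
have P2 : forall t, unitI t -> E (c (j t)) /\ h1 (c (j t)) = j t.
  by move=> t tI; have [y Ey <-] := jE t tI; rewrite cK.
split => //.
have c1 : {within unitI, continuous (c \o j)} by exact: (wcomp cj cc jE).
split => //; split; [|split; [|split; [|split]]].
- by move=> t tI; apply: ES; have [] := P2 t tI.
- by rewrite /= cX.
- by rewrite /= cX.
- split.
    move=> t1 t2 h1' h2' eq; apply: injj => //.
    have [_ e1] := P2 t1 (openI_unitI h1'); have [_ e2] := P2 t2 (openI_unitI h2').
    by rewrite -e1 -e2; move: eq => /= ->.
  split; first exact: wsub (@openI_unitI R) c1.
  exists (Gj \o h1); split.
    apply: (wcomp (B := j @` Defs.openI)) => //.
      apply: wsub ch1; move=> y [t tO <-]; have [] := P2 t (openI_unitI tO); done.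
    move=> y [t tO <-]; exists t => //; have [] := P2 t (openI_unitI tO); done.
  by move=> t tO /=; have [_ ->] := P2 t (openI_unitI tO); rewrite GjK.
- move=> t tO /= Xc; apply: (jnX t tO).
  have [_ e] := P2 t (openI_unitI tO).
  by rewrite -e h1X.
Qed.

Definition hdata {R : realType} (X E : set (T3 R)) (h : R -> T3 R -> T3 R) :=
  {within [set p | unitI p.1 /\ E p.2], continuous (fun p => h p.1 p.2)} /\
  (forall t, unitI t -> embedding_on E (h t) /\ (h t) @` E `<=` S2) /\
  (forall x, E x -> h 0 x = x) /\
  (forall t x, unitI t -> X x -> h t x = x) /\ X `<=` E /\ E `<=` S2.

Lemma unitI0 {R : realType} : unitI (0 : R).
Proof. by apply/unitIP; split; lra. Qed.
Lemma unitI1 {R : realType} : unitI (1 : R).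
Proof. by apply/unitIP; split; lra. Qed.

Lemma arc_iso_sym {R : realType} {X l l' : set (T3 R)} :
  arc_iso X l l' -> arc_iso X l' l.
Proof.
move=> [H [cH [aH [e0 e1]]]]; have [cH' aH'] := iso_rev (conj cH aH).
exists (fun s => H (1 - s)); split => //; split => //.
by rewrite /= subr0 subrr.
Qed.

Lemma K1 {R : realType} (X E : set (T3 R)) h (lt l : set (T3 R)) :
  hdata X E h -> lt `<=` E -> arc_iso X lt l -> arc_iso X (h 1 @` lt) l.
Proof.
move=> [hc [hemb [h0 [hX [XE ES]]]]] ltE [H [cH [aH [e0 e1]]]].
have a0 := aH 0 unitI0.
have jE : forall t, unitI t -> E (H 0 t) by move=> t tI; apply: ltE; rewrite e0; exists t.
have Ph := iso_h hc hemb hX XE a0 jE.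
have Pr := iso_rev Ph.
have Pc := iso_cat Pr (conj cH aH) (fun t tI => eq_ind_r (fun z => h z (H 0 t) = H 0 t)
                                   (h0 _ (jE t tI)) (subrr (1 : R))).
case: Pc => cc ac.
exists (icat (fun s => (fun s t => h s (H 0 t)) (1 - s)) H); split => //; split => //; split.
- rewrite icat0 /= subr0 e0; apply/seteqP; split => y.
    by move=> [z [t tI <-] <-]; exists t.
  by move=> [t tI <-]; exists (H 0 t) => //; exists t.
- by rewrite icat1.
Qed.

Lemma K2 {R : realType} (X E : set (T3 R)) h c (lt l : set (T3 R)) :
  hdata X E h -> {within h 1 @` E, continuous c} ->
  (forall y, E y -> c (h 1 y) = y) -> (forall x, X x -> c x = x) ->
  lt `<=` E -> arc_iso X (h 1 @` lt) l -> arc_iso X lt l.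
Proof.
move=> hd cc cK cX ltE [H [cH [aH [e0 e1]]]].
case: (hd) => [hc [hemb [h0 [hX [XE ES]]]]].
have a0 := aH 0 unitI0.
have jE : forall t, unitI t -> (h 1 @` E) (H 0 t).
  move=> t tI; have : (H 0 @` unitI) (H 0 t) by exists t.
  by rewrite -e0 => -[y ly <-]; exists y => //; exact: ltE.
have ch1 : {within E, continuous (h 1)} by have [[_ []]] := hemb 1 unitI1.
have [pc P2] := param_c ch1 cc cK cX (fun x Xx => hX 1 x unitI1 Xx) ES a0 jE.
have Ph := iso_h hc hemb hX XE pc (fun t tI => (P2 t tI).1).
have Pc := iso_cat Ph (conj cH aH) (fun t tI => (P2 t tI).2).
case: Pc => cc' ac.
exists (icat (fun s t => h s ((c \o H 0) t)) H); split => //; split => //; split.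
- rewrite icat0.
  have -> : (fun t => h 0 ((c \o H 0) t)) @` unitI = (c \o H 0) @` unitI.
    by apply: eq_imagel => t tI; rewrite h0 //; exact: (P2 t tI).1.
  apply/seteqP; split => y.
    move=> ly; have : (H 0 @` unitI) (h 1 y) by rewrite -e0; exists y.
    by case=> t tI et; exists t => //=; rewrite et cK //; exact: ltE.
  move=> [t tI <-] /=; have : (H 0 @` unitI) (H 0 t) by exists t.
  by rewrite -e0 => -[z lz <-]; rewrite cK //; exact: ltE.
- by rewrite icat1.
Qed.

Lemma LIFTg {R : realType} (f g h1 c : T3 R -> T3 R) (X l lt E D : set (T3 R))
    (a b x : T3 R) :
  marked f X -> is_arc X l -> is_arc X lt ->
  (S2 `&` f @^-1` (l `\` X)) x ->
  lt = closure (connected_component (S2 `&` f @^-1` (l `\` X)) x) ->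
  lt `<=` E -> E `<=` S2 ->
  {within E, continuous h1} -> inj_on E h1 ->
  (forall y, E y -> S2 (h1 y) /\ ~ (D `\` [set a; b]) (h1 y)) ->
  (forall z, S2 z -> ~ D z -> exists y, E y /\ h1 y = z) ->
  (forall y, E y -> c (h1 y) = y) ->
  (forall y, E y -> g (h1 y) = f y) ->
  closed D -> {within S2 `\` sInt D, continuous c} ->
  E a -> E b -> h1 a = a -> h1 b = b -> X (f a) -> X (f b) ->
  (S2 `&` g @^-1` (l `\` X)) (h1 x) /\
  h1 @` lt = closure (connected_component (S2 `&` g @^-1` (l `\` X)) (h1 x)).
Proof.
move=> mf arcl [jt [ajt ltE']] Ax ltcl ltE ES ch1 injh1 h1S h1surj cK gE clD cc
  Ea Eb ha hb Xfa Xfb.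
set Af := S2 `&` f @^-1` (l `\` X).
set Ag := S2 `&` g @^-1` (l `\` X).
set K := connected_component Af x.
have KE : K `<=` E by move=> y Ky; apply: ltE; rewrite ltcl; exact: subset_closure.
have AgE : forall y, E y -> Ag (h1 y) <-> Af y.
  move=> y Ey; rewrite /Ag /Af /preimage /= gE //; split => -[_ h]; split => //.
    exact: ES.
  exact: (h1S y Ey).1.
have Kx : K x by exact: connected_component_refl.
have Agx : Ag (h1 x) by apply/AgE => //; exact: KE.
split => //.
set K' := connected_component Ag (h1 x).
have sub1 : h1 @` K `<=` K'.
  apply: connected_component_max.
  - by exists x.
  - by move=> z [y Ky <-]; apply/AgE; [exact: KE|exact: connected_component_sub Ky].
  - apply: connected_continuous_connected; first exact: component_connected.
    exact: wsub KE ch1.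
have hlt : h1 @` lt = (h1 \o jt) @` unitI.
  rewrite ltE'; apply/seteqP; split => z.
    by move=> [y [t tI <-] <-]; exists t.
  by move=> [t tI <-]; exists (jt t) => //; exists t.
have hlt_cl : closed (h1 @` lt).
  rewrite hlt; apply: (compact_closed (@norm_hausdorff _ _)).
  apply: continuous_compact; last exact: unitI_compact.
  by apply: (wcomp ajt.1 ch1) => t tI; apply: ltE; rewrite ltE'; exists t.
have opn : forall k, K k -> exists Ob, [/\ open Ob, Ob (h1 k) & Ob `&` Ag `<=` h1 @` K].
  move=> k Kk; have Ek := KE k Kk.
  have nDk : ~ D (h1 k).
    move=> Dk; have [S2k nDab] := h1S k Ek.
    case: (pselect ([set a; b] (h1 k))) => [[ea|eb]|nab]; last by apply: nDab.
      have eka : k = a by apply: injh1 => //; rewrite ha.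
      by have [_ [_ []]] := connected_component_sub Kk; rewrite eka.
    have ekb : k = b by apply: injh1 => //; rewrite hb.
    by have [_ [_ []]] := connected_component_sub Kk; rewrite ekb.
  have [N [oN Nk NP]] := @LOC R f X l x k mf arcl Kk.
  have Sy : (S2 `\` sInt D) (h1 k).
    by split; [exact: (h1S k Ek).1|move=> -[Dk _]; exact: nDk].
  have ck : c (h1 k) = k := cK k Ek.
  have Nck : N (c (h1 k)) by rewrite ck.
  have [Q2 [oQ2 Q2y Q2P]] := wcont_at cc Sy (open_nbhs_nbhs (conj oN Nck)).
  exists (Q2 `&` ~` D); split => //.
    by apply: openI => //; exact: closed_openC.
  move=> z [[Q2z nDz] Agz].
  have Sz : S2 z := Agz.1.
  have [w [Ew hw]] := h1surj z Sz nDz.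
  have Nw : N w.
    have Sz' : (S2 `\` sInt D) z by split => // -[Dz _]; exact: nDz.
    have := Q2P z Sz' Q2z; by rewrite -hw cK.
  have Afw : Af w by apply/AgE => //; rewrite hw.
  by exists w => //; apply: NP => //; exact: ES.
have eqK : h1 @` K = K'.
  rewrite /K'; apply: (@component_connected _ Ag (h1 x) (h1 @` K)); rewrite -/K'.
  - by exists (h1 x); exists x.
  - exists (\bigcup_(Ob in [set Ob | open Ob /\ Ob `&` Ag `<=` h1 @` K]) Ob).
      by apply: bigcup_open => Ob [].
    apply/seteqP; split.
      move=> z [k Kk <-]; split; first by apply: sub1; exists k.
      have [Ob [oOb Obk ObP]] := opn k Kk.
      by exists Ob.
    move=> z [K'z [Ob [_ ObP] Obz]]; apply: ObP; split => //.
    exact: connected_component_sub K'z.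
  - exists (h1 @` lt) => //.
    apply/seteqP; split.
      move=> z [k Kk <-]; split; first by apply: sub1; exists k.
      exists k => //; rewrite ltcl; exact: subset_closure.
    move=> z [K'z [p ltp ep]].
    have Afp : Af p by apply/AgE; [exact: ltE|rewrite ep; exact: connected_component_sub K'z].
    exists p => //; apply: component_closure => //; by rewrite -ltcl.
rewrite -eqK; apply/seteqP; split.
  move=> z [p ltp <-] B nB.
  have Ep := ltE p ltp.
  have := (wcontE _ _).1 ch1 p Ep B nB.
  move=> nP; have clp : closure K p by rewrite -ltcl.
  have [y [Ky Py]] := clp _ nP.
  by exists (h1 y); split; [exists y|exact: Py (KE y Ky)].
move=> z cz; apply: hlt_cl; apply: (closureS _ cz) => w [k Kk <-]; exists k => //.
by rewrite ltcl; exact: subset_closure.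
Qed.

Theorem mainTheorem6 (R : realType) (f g : T3 R -> T3 R)
    (X alpha : set (T3 R)) (a b : T3 R) (n : nat) (Lam : set (set (T3 R))) :
  marked f X ->
  blowing_up_conditions f X alpha a b ->
  (1 <= n)%N ->
  blown_up f X alpha a b n g ->
  arc_system X Lam ->
  fwd_invariant f X Lam ->
  (exists L0 Lt, L0 `<=` Lam /\ lift_of_system f X L0 Lt /\ sys_iso X Lt Lam /\
     forall lt, Lt lt -> lt `&` arcInt alpha a b = set0) ->
  fwd_invariant g X Lam.
Proof.
move=> mf buc _ bu arcLam _ [L0 [Lt [L0sub [[arcLt liftLt] [isoLt lttI]]]]].
case: (mf) => [[fS [fc fl]] [_ [_ [XS [PX fX]]]]].
case: buc => [[ab [ja [cja [Sja [injja [ja0 [ja1 alphaE]]]]]]]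
  [_ [[L [al [_ [alU alArcs]]]] IaXC]]].
case: bu => W [D [Dp [Dm [c [h [hp [hpp BU]]]]]]].
case: BU => [[oW [IaW [bWa [bWb [clWeq injW]]]]] BU].
case: BU => [[cD [DWab [bDa bDb]]] BU].
case: BU => [[hc [hemb [h0 [hW himg]]]] BU].
case: BU => [[cc [cS [cW cK]]] BU].
case: BU => [_ [_ [_ [gout _]]]].
set Ia := arcInt alpha a b in IaXC lttI IaW hc hemb h0 hW himg cK.
set E := S2 `\` Ia.
have jaU : ja @` unitI = \bigcup_(i in [set i : nat | (i < L)%N]) al i.
  by rewrite -alphaE.
have Xfa : X (f a).
  have := @endpoint_in R ja (S2 `&` f @^-1` X) L al 0 cja injja jaU alArcs (or_introl erefl).
  by rewrite ja0 => -[].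
have Xfb : X (f b).
  have := @endpoint_in R ja (S2 `&` f @^-1` X) L al 1 cja injja jaU alArcs (or_intror erefl).
  by rewrite ja1 => -[].
have alpha_a : alpha a by rewrite alphaE -ja0; exists 0 => //; exact: unitI0.
have alpha_b : alpha b by rewrite alphaE -ja1; exists 1 => //; exact: unitI1.
have alphaS : alpha `<=` S2 by rewrite alphaE => y [t tI <-]; exact: Sja.
have XnIa : forall x, X x -> ~ Ia x.
  move=> x Xx Iax; have : (Ia `&` (X `|` crit f)) x by split => //; left.
  by rewrite IaXC.
have XnW : forall x, X x -> ~ W x.
  move=> x Xx Wx.
  have : (closure W `&` (S2 `&` f @^-1` X)) x.
    split; first exact: subset_closure.
    by split; [exact: XS|apply: fX; exists x].
  rewrite clWeq => -[ax _].
  case: (pselect ([set a; b] x)) => [[ea|eb]|nab].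
  - by case: bWa => _; rewrite -ea.
  - by case: bWb => _; rewrite -eb.
  - by apply: (XnIa x Xx); split.
have XE : X `<=` E by move=> x Xx; split; [exact: XS|exact: XnIa].
have ES : E `<=` S2 by move=> y [].
have hX : forall t x, unitI t -> X x -> h t x = x.
  by move=> t x tI Xx; apply: hW => //; [exact: XE|exact: XnW].
have hd : hdata X E h by split => //; split => //; split => //; split.
have [[injh1 [ch1 _]] _] := hemb 1 unitI1.
have h1S : forall y, E y -> S2 (h 1 y) /\ ~ (D `\` [set a; b]) (h 1 y).
  move=> y Ey; have : (h 1 @` E) (h 1 y) by exists y.
  by rewrite himg => -[].
have h1surj : forall z, S2 z -> ~ D z -> exists y, E y /\ h 1 y = z.
  move=> z Sz nDz; have : (S2 `\` (D `\` [set a; b])) z by split => // -[].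
  by rewrite -himg => -[y Ey <-]; exists y.
have noInt : forall y, E y -> (S2 `\` sInt D) (h 1 y).
  move=> y Ey; have [Sy nDab] := h1S y Ey; split => // sD.
  case: (pselect ([set a; b] (h 1 y))) => [[ea|eb]|nab].
  - by case: bDa => _; rewrite -ea.
  - by case: bDb => _; rewrite -eb.
  - by apply: nDab; split => //; exact: sD.1.
have gE : forall y, E y -> g (h 1 y) = f y.
  by move=> y Ey; rewrite gout; [rewrite cK|exact: noInt].
have cc' : {within h 1 @` E, continuous c}.
  by apply: wsub cc => z [y Ey <-]; exact: noInt.
have cX : forall x, X x -> c x = x.
  move=> x Xx; apply: cW; last exact: XnW.
  split; first exact: XS.
  move=> sDx; case: (DWab x sDx.1) => [Wx|[ea|eb]].
  - exact: XnW Wx.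
  - by case: bDa => _; rewrite -ea.
  - by case: bDb => _; rewrite -eb.
have Ea : E a by split; [exact: alphaS|move=> [_ []]; left].
have Eb : E b by split; [exact: alphaS|move=> [_ []]; right].
have ha : h 1 a = a by apply: hW => //; [exact: unitI1|case: bWa].
have hb : h 1 b = b by apply: hW => //; [exact: unitI1|case: bWb].
have clD : closed D by case: cD => W' [_ ->]; exact: closed_closure.
have ltE : forall lt, Lt lt -> lt `<=` E.
  move=> lt Ltlt y lty; have [j [[_ [Sj _]] ltj]] := arcLt.1 lt Ltlt.
  split; first by move: lty; rewrite ltj => -[t tI <-]; exact: Sj.
  move=> Iy; have : (lt `&` Ia) y by split.
  by rewrite lttI.
have K1' := @K1 R X E h.
have K2' := @K2 R X E h c.
exists L0, ((fun lt => h 1 @` lt) @` Lt); split => //; split.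
- split; first split.
  + move=> y [lt Ltlt <-]; have [j [aj ltj]] := arcLt.1 lt Ltlt.
    have jE : forall t, unitI t -> E (j t).
      by move=> t tI; apply: (ltE lt Ltlt); rewrite ltj; exists t.
    have [_ ap] := iso_h hc hemb hX XE aj jE.
    exists (fun t => h 1 (j t)); split; first exact: ap 1 unitI1.
    by rewrite ltj; apply/seteqP; split => z; [move=> [w [t tI <-] <-]; exists t|
      move=> [t tI <-]; exists (j t) => //; exists t].
  + move=> y1 y2 [lt1 Lt1 <-] [lt2 Lt2 <-] iso12.
    have i1 := K2' lt1 _ hd cc' cK cX (ltE lt1 Lt1) iso12.
    have i2 := K2' lt2 _ hd cc' cK cX (ltE lt2 Lt2) (arc_iso_sym i1).
    by rewrite (arcLt.2 lt2 lt1 Lt2 Lt1 i2).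
  + move=> y [lt Ltlt <-].
    have [l [L0l [x [Ax ltcl]]]] := liftLt lt Ltlt.
    have arcl : is_arc X l := arcLam.1 l (L0sub l L0l).
    have [Ag ecl] := @LIFTg R f g (h 1) c X l lt E D a b x mf arcl (arcLt.1 lt Ltlt)
      Ax ltcl (ltE lt Ltlt) ES ch1 injh1 h1S h1surj cK gE clD cc Ea Eb ha hb Xfa Xfb.
    by exists l; split => //; exists (h 1 x).
- split.
  + move=> y [lt Ltlt <-].
    have [l [[Laml isol] uniq]] := isoLt.1 lt Ltlt.
    exists l; split; first by split => //; exact: K1' lt l hd (ltE lt Ltlt) isol.
    move=> l'' [Laml'' iso'']; apply: uniq; split => //.
    exact: K2' lt l'' hd cc' cK cX (ltE lt Ltlt) iso''.
  + move=> l' Laml'.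
    have [lt [[Ltlt isol] uniq]] := isoLt.2 l' Laml'.
    exists (h 1 @` lt); split.
      split; first by exists lt.
      exact: arc_iso_sym (K1' lt l' hd (ltE lt Ltlt) (arc_iso_sym isol)).
    move=> y [[lt2 Lt2 <-] iso2].
    have i2 := K2' lt2 l' hd cc' cK cX (ltE lt2 Lt2) (arc_iso_sym iso2).
    by rewrite (uniq lt2 (conj Lt2 (arc_iso_sym i2))).
Qed.
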